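(* Let $\alpha>1$ be an integer with $\alpha\equiv 2\pmod 3$. Then for every positive integer $a$, $$S_3^1(a)\leq 1.3\, a^{\log_3 2},$$ where $S_3^1(a)$ is the number of integers $0\le s<a$ such that the base-$3$ representation of $\alpha^s$ contains no digit equal to $2$.
   Context: In general, for an odd prime $p$, a base-$p$ digit $d$ is large if $d\ge p/2$, and $S_p^n(a)=\#\{0\le s<a : (\alpha^s)_p\text{ contains fewer than } n \text{ large digits}\}$; for $p=3$, $n=1$ this is as stated in the claim. *)

(* Defs.v *)
From Stdlib Require Import Arith Reals List.
Import ListNotations.

Fixpoint digits3_aux (fuel n : nat) : list nat :=
  match fuel with
  | O => []
  | S f => match n with
           | O => []
           | _ => (n mod 3) :: digits3_aux f (n / 3)
           end
  end.

Definition digits3 (n : nat) : list nat := digits3_aux n n.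

Definition no_digit2 (n : nat) : bool :=
  forallb (fun d => negb (Nat.eqb d 2)) (digits3 n).

Definition S31 (alpha a : nat) : nat :=
  length (filter (fun s => no_digit2 (alpha ^ s)) (seq 0 a)).

(* Main.v *)
Require Import Defs.
From Stdlib Require Import Arith Reals.
From Stdlib Require Import Lia List Bool Lra.
Import ListNotations.
Open Scope nat_scope.

Definition digit (p n : nat) : nat := (n / 3 ^ p) mod 3.

Lemma digit_S p n : digit (S p) n = digit p (n / 3).
Proof. unfold digit. rewrite Nat.pow_succ_r', Nat.Div0.div_div; auto.
Qed.

Lemma digit_in : forall fuel n p, n <= fuel -> digit p n <> 0 ->
  In (digit p n) (digits3_aux fuel n).
Proof.
  induction fuel; intros n p Hn Hd.
  - assert (n = 0) by lia. subst. unfold digit in Hd. rewrite Nat.Div0.div_0_l in Hd.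
    simpl in Hd. lia.
  - cbn [digits3_aux]. destruct n as [|n'].
    + unfold digit in Hd. rewrite Nat.Div0.div_0_l in Hd. simpl in Hd. lia.

    + destruct p as [|p].
      * left. unfold digit. rewrite Nat.pow_0_r, Nat.div_1_r. reflexivity.
      * right. rewrite digit_S in *. apply IHfuel; auto.
        assert (S n' / 3 < S n') by (apply Nat.div_lt; lia). lia.
Qed.

Lemma no_digit2_spec n p : no_digit2 n = true -> digit p n <> 2.
Proof.
  unfold no_digit2, digits3. intros H Hd.
  assert (Hi := digit_in n n p (le_n _) ltac:(lia)).
  rewrite forallb_forall in H. apply H in Hi. rewrite Hd in Hi. discriminate.
Qed.

Lemma digit_add_top P X Y : digit P (X + 3 ^ P * Y) = (digit P X + Y) mod 3.
Proof.
  unfold digit. rewrite (Nat.mul_comm (3^P) Y), Nat.div_add.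
  rewrite Nat.Div0.add_mod_idemp_l; auto.
  apply Nat.pow_nonzero; lia.
Qed.

Lemma digit_add_low j P X Y : j < P -> digit j (X + 3 ^ P * Y) = digit j X.
Proof.
  intros H. unfold digit.
  replace (3 ^ P * Y) with ((3 ^ (P - S j) * Y) * 3 * 3 ^ j).
  2:{ replace (3 ^ P) with (3 ^ (P - S j) * 3 ^ 1 * 3 ^ j)
        by (rewrite <- !Nat.pow_add_r; f_equal; lia). rewrite Nat.pow_1_r. generalize (3 ^ (P - S j)) (3 ^ j); intros; ring. }
  rewrite Nat.div_add by (apply Nat.pow_nonzero; lia).
  apply Nat.mod_add. lia.
Qed.
Open Scope bool_scope.

Lemma mod3_add3 a K : (a + 3 * K) mod 3 = a mod 3.
Proof. rewrite Nat.mul_comm. apply Nat.Div0.mod_add. Qed.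

Lemma cube_step e' w : (1 + 3 ^ S e' * w) ^ 3 =
  1 + 3 ^ S (S e') * (w + 3 * (3 ^ e' * w * w + 3 ^ e' * 3 ^ e' * w * w * w)).
Proof. rewrite !Nat.pow_succ_r', Nat.pow_0_r. generalize (3 ^ e'); intros. ring. Qed.

Lemma lte beta v w0 : 1 <= v -> w0 mod 3 <> 0 -> beta = 1 + 3 ^ v * w0 ->
  forall m, exists w, beta ^ (3 ^ m) = 1 + 3 ^ (v + m) * w /\ w mod 3 <> 0.
Proof.
  intros Hv Hw0 Hb. induction m as [|m IH].
  - exists w0. rewrite Nat.pow_0_r, Nat.pow_1_r, Nat.add_0_r. auto.
  - destruct IH as [w [Hw Hw3]].
    destruct (v + m) as [|e'] eqn:He; [lia|].
    exists (w + 3 * (3 ^ e' * w * w + 3 ^ e' * 3 ^ e' * w * w * w)).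
    split.
    + rewrite Nat.pow_succ_r', (Nat.mul_comm 3 (3 ^ m)), Nat.pow_mul_r, Hw, cube_step.
      replace (v + S m) with (S (S e')) by lia. reflexivity.
    + rewrite mod3_add3. auto.
Qed.

Lemma forallb_ext_in {A} (f g : A -> bool) l :
  (forall x, In x l -> f x = g x) -> forallb f l = forallb g l.
Proof.
  induction l; simpl; intros H; auto. rewrite H by auto. rewrite IHl; auto.
Qed.

Definition ok beta v m t : bool :=
  forallb (fun j => negb (digit (v + j) (beta ^ t) =? 2)) (seq 0 m).
Definition ind beta v m t : nat := if ok beta v m t then 1 else 0.

Lemma ok_S beta v m t : ok beta v (S m) t =
  ok beta v m t && negb (digit (v + m) (beta ^ t) =? 2).
Proof. unfold ok. rewrite seq_S, forallb_app. simpl. rewrite andb_true_r. reflexivity. Qed.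

Lemma L3 beta v w0 : 1 <= v -> w0 mod 3 <> 0 -> beta = 1 + 3 ^ v * w0 ->
  forall m t, ind beta v (S m) t + ind beta v (S m) (t + 3 ^ m)
     + ind beta v (S m) (t + 2 * 3 ^ m) <= 2 * ind beta v m t.
Proof.
  intros Hv Hw0 Hb m t.
  destruct (lte beta v w0 Hv Hw0 Hb m) as [w [Hw Hw3]].
  set (P := v + m).
  set (X := beta ^ t).
  assert (HX : X mod 3 = 1).
  { unfold X.
    assert (beta mod 3 = 1).
    { rewrite Hb. destruct v as [|v']; [lia|]. rewrite Nat.pow_succ_r'.
      rewrite <- Nat.mul_assoc, mod3_add3. reflexivity. }
    clear -H. induction t as [|t IH]; [reflexivity|].
    rewrite Nat.pow_succ_r', Nat.Div0.mul_mod, H, IH. reflexivity. }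
  assert (E1 : beta ^ (t + 3 ^ m) = X + 3 ^ P * (X * w)).
  { rewrite Nat.pow_add_r, Hw. fold P X. generalize (3 ^ P); intros. ring. }
  assert (E2 : beta ^ (t + 2 * 3 ^ m) = X + 3 ^ P * (2 * X * w + 3 ^ P * X * w * w)).
  { rewrite Nat.pow_add_r, (Nat.mul_comm 2), Nat.pow_mul_r, Hw, Nat.pow_2_r.
    fold P X. generalize (3 ^ P); intros. ring. }
  assert (L1 : ok beta v m (t + 3 ^ m) = ok beta v m t).
  { unfold ok. apply forallb_ext_in. intros j Hj. apply in_seq in Hj.
    rewrite E1, digit_add_low by (unfold P; lia). reflexivity. }
  assert (L2 : ok beta v m (t + 2 * 3 ^ m) = ok beta v m t).
  { unfold ok. apply forallb_ext_in. intros j Hj. apply in_seq in Hj.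
    rewrite E2, digit_add_low by (unfold P; lia). reflexivity. }
  unfold ind. rewrite !ok_S, L1, L2. fold P. rewrite E1, E2, !digit_add_top.
  fold X.
  destruct (ok beta v m t); [rewrite !andb_true_l | rewrite !andb_false_l; simpl; lia].
  pose proof (Nat.div_mod X 3 ltac:(lia)) as DX. rewrite HX in DX.
  pose proof (Nat.div_mod w 3 ltac:(lia)) as DW.
  set (x := X / 3) in *. set (y := w / 3) in *. assert (Hr3 : w mod 3 < 3) by (apply Nat.mod_upper_bound; lia).
  set (r := w mod 3) in *. clearbody x y r.
  assert (Hr : r = 1 \/ r = 2) by lia.
  assert (HP : 3 ^ P = 3 * 3 ^ (P - 1)).
  { rewrite <- Nat.pow_succ_r'. f_equal. unfold P; lia. }
  set (d0 := digit P X).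
  assert (Hd : d0 < 3) by (apply Nat.mod_upper_bound; lia).
  assert (D1 : (d0 + X * w) mod 3 = (d0 + r) mod 3).
  { replace (d0 + X * w) with ((d0 + r) + 3 * (3 * x * y + x * r + y)).
    apply mod3_add3. rewrite DX, DW. ring. }
  assert (D2 : (d0 + (2 * X * w + 3 ^ P * X * w * w)) mod 3 = (d0 + 2 * r) mod 3).
  { replace (d0 + (2 * X * w + 3 ^ P * X * w * w)) with
      ((d0 + 2 * r) + 3 * (2 * (3 * x * y + x * r + y) + 3 ^ (P - 1) * X * w * w)).
    apply mod3_add3. rewrite HP. rewrite DX, DW.
    generalize (3 ^ (P - 1)); intros. ring. }
  rewrite D1, D2.
  assert (Hd3 : d0 = 0 \/ d0 = 1 \/ d0 = 2) by lia. clearbody d0.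
  destruct Hr as [Hr|Hr]; rewrite Hr;
  destruct Hd3 as [Hd3|[Hd3|Hd3]]; rewrite Hd3; simpl; lia.
Qed.
Open Scope bool_scope.

Fixpoint sumf (f : nat -> nat) n := match n with 0 => 0 | S k => sumf f k + f k end.

Lemma sumf_add f g n : sumf (fun i => f i + g i) n = sumf f n + sumf g n.
Proof. induction n; cbn [sumf]; lia. Qed.

Lemma sumf_le f g n : (forall i, i < n -> f i <= g i) -> sumf f n <= sumf g n.
Proof. induction n; simpl; intros H; auto. specialize (IHn (fun i Hi => H i ltac:(lia))).
  specialize (H n ltac:(lia)). lia. Qed.

Lemma sumf_split f n k : sumf f (n + k) = sumf f n + sumf (fun i => f (n + i)) k.
Proof. induction k. - rewrite Nat.add_0_r. simpl. lia. - rewrite Nat.add_succ_r. simpl. rewrite IHk. lia. Qed.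

Lemma sumf_mono f n n' : n <= n' -> sumf f n <= sumf f n'.
Proof. intros H. replace n' with (n + (n' - n)) by lia. rewrite sumf_split. lia. Qed.

Lemma sumf_double f N : sumf f (2 * N) = sumf (fun t => f (2 * t) + f (2 * t + 1)) N.
Proof. induction N; auto. replace (2 * S N) with (S (S (2 * N))) by lia.
  change (sumf f (2 * N) + f (2 * N) + f (S (2 * N)) =
    sumf (fun t => f (2 * t) + f (2 * t + 1)) N + (f (2 * N) + f (2 * N + 1))).
  rewrite <- IHN. replace (2 * N + 1) with (S (2 * N)) by lia. lia. Qed.

Lemma sumf_scale f n : sumf (fun i => 2 * f i) n = 2 * sumf f n.
Proof. induction n; cbn [sumf]; lia. Qed.

Lemma count_bound beta v w0 : 1 <= v -> w0 mod 3 <> 0 -> beta = 1 + 3 ^ v * w0 ->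
  forall m, sumf (ind beta v m) (3 ^ m) <= 2 ^ m.
Proof.
  intros Hv Hw0 Hb m. induction m as [|m IH].
  - simpl. unfold ind, ok. simpl. lia.
  - set (N := 3 ^ m) in *.
    replace (3 ^ S m) with (N + N + N) by (unfold N; rewrite Nat.pow_succ_r'; lia).
    rewrite !sumf_split.
    rewrite <- !sumf_add.
    apply Nat.le_trans with (sumf (fun i => 2 * ind beta v m i) N).
    + apply sumf_le. intros i _.
      pose proof (L3 beta v w0 Hv Hw0 Hb m i) as H.
      fold N in H. replace (N + i) with (i + N) by lia.
      replace (N + N + i) with (i + 2 * N) by lia. lia.
    + rewrite sumf_scale, Nat.pow_succ_r'. lia.
Qed.

Lemma S31_sumf alpha a :
  S31 alpha a = sumf (fun s => if no_digit2 (alpha ^ s) then 1 else 0) a.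
Proof.
  unfold S31. induction a; auto.
  rewrite seq_S, filter_app, length_app, IHa. simpl.
  destruct (no_digit2 (alpha ^ a)); simpl; lia.
Qed.

Lemma val3 : forall n, 0 < n -> exists v u, n = 3 ^ v * u /\ u mod 3 <> 0.
Proof.
  intros n. induction n as [n IH] using lt_wf_ind. intros Hn.
  destruct (Nat.eq_dec (n mod 3) 0) as [H0|H0].
  - pose proof (Nat.div_mod n 3 ltac:(lia)) as D. rewrite H0 in D.
    destruct (IH (n / 3)) as [v [u [Hu Hu3]]]; [lia|lia|].
    exists (S v), u. split; auto. rewrite Nat.pow_succ_r'. rewrite D at 1. rewrite Hu. ring.
  - exists 0, n. simpl. split; [lia|auto].
Qed.

Lemma pow_mod1 b t : b mod 3 = 1 -> (b ^ t) mod 3 = 1.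
Proof.
  intros H. induction t as [|t IH]; [reflexivity|].
  rewrite Nat.pow_succ_r', Nat.Div0.mul_mod, H, IH. reflexivity.
Qed.

Lemma S31_bound alpha m a : 1 < alpha -> alpha mod 3 = 2 -> a <= 2 * 3 ^ m ->
  S31 alpha a <= 2 ^ m.
Proof.
  intros H1 H2 Ha.
  pose proof (Nat.div_mod alpha 3 ltac:(lia)) as D. rewrite H2 in D.
  set (q := alpha / 3) in *. clearbody q.
  destruct (val3 (alpha + 1) ltac:(lia)) as [v [u [Hu Hu3]]].
  assert (Hv : 1 <= v).
  { destruct v; [|lia]. exfalso. apply Hu3. simpl in Hu.
    replace u with (0 + 3 * (q + 1)) by lia. rewrite mod3_add3. reflexivity. }
  set (beta := alpha ^ 2).
  set (w0 := u * (3 * q + 1)).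
  assert (Hb : beta = 1 + 3 ^ v * w0).
  { unfold beta, w0. rewrite Nat.mul_assoc, <- Hu, D. rewrite Nat.pow_2_r. ring. }
  assert (Hw0 : w0 mod 3 <> 0).
  { unfold w0. replace (u * (3 * q + 1)) with (u + 3 * (u * q)) by ring.
    rewrite mod3_add3. auto. }
  assert (Hbm : beta mod 3 = 1).
  { rewrite Hb. destruct v as [|v']; [lia|]. rewrite Nat.pow_succ_r'.
    rewrite <- Nat.mul_assoc, mod3_add3. reflexivity. }
  rewrite S31_sumf.
  eapply Nat.le_trans; [apply sumf_mono; exact Ha|].
  rewrite sumf_double.
  eapply Nat.le_trans; [|apply (count_bound beta v w0 Hv Hw0 Hb m)].
  apply sumf_le. intros t _.
  assert (Hodd : no_digit2 (alpha ^ (2 * t + 1)) = false).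
  { destruct (no_digit2 (alpha ^ (2 * t + 1))) eqn:E; auto. exfalso.
    apply (no_digit2_spec _ 0) in E. apply E. unfold digit.
    rewrite Nat.pow_0_r, Nat.div_1_r, Nat.pow_add_r, Nat.pow_mul_r, Nat.pow_1_r.
    fold beta. rewrite Nat.Div0.mul_mod, pow_mod1, H2 by auto. reflexivity. }
  rewrite Hodd, Nat.add_0_r.
  destruct (no_digit2 (alpha ^ (2 * t))) eqn:E; [|lia].
  unfold ind, ok. replace (forallb _ _) with true; [lia|].
  symmetry. apply forallb_forall. intros j _.
  apply negb_true_iff, Nat.eqb_neq.
  unfold beta. rewrite <- Nat.pow_mul_r. apply no_digit2_spec. auto.
Qed.
Open Scope R_scope.

Lemma exists_m : forall m a, (a <= 2 * 3 ^ m)%nat ->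
  (a <= 2)%nat \/ exists k, (2 * 3 ^ k < a)%nat /\ (a <= 2 * 3 ^ S k)%nat.
Proof.
  induction m; intros a Ha.
  - left. simpl in Ha. lia.
  - destruct (Nat.le_gt_cases a (2 * 3 ^ m)) as [H|H]; auto.
    right. exists m. auto.
Qed.

Lemma pow3_ge a : (a <= 3 ^ a)%nat.
Proof. induction a; simpl; [lia|]. pose proof (Nat.pow_nonzero 3 a). lia. Qed.

Lemma key_const : 20 / 13 < Rpower 2 (ln 2 / ln 3).
Proof.
  assert (L2p : 0 < ln 2) by (pose proof ln_lt_2; lra).
  assert (L3 : ln 2 < ln 3) by (apply ln_increasing; lra).
  assert (H58 : 5 * ln 3 < 8 * ln 2).
  { assert (H : ln (3 ^ 5) < ln (2 ^ 8)) by (apply ln_increasing; simpl; lra).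
    rewrite !ln_pow in H by lra. simpl INR in H. lra. }
  assert (H1 : 8 * ln (20 / 13) < 5 * ln 2).
  { assert (H : ln ((20/13) ^ 8) < ln (2 ^ 5)) by
      (apply ln_increasing; [apply pow_lt; lra|]; simpl; lra).
    rewrite !ln_pow in H by lra. simpl INR in H. lra. }
  assert (Hc : 5 / 8 <= ln 2 / ln 3).
  { replace (ln 2 / ln 3) with (5/8 + (8 * ln 2 - 5 * ln 3) / (8 * ln 3)) by (field; lra).
    assert (0 <= (8 * ln 2 - 5 * ln 3) / (8 * ln 3)).
    { unfold Rdiv. apply Rmult_le_pos; [lra|]. left. apply Rinv_0_lt_compat. lra. }
    lra. }
  apply ln_lt_inv; [lra| unfold Rpower; apply exp_pos |].
  rewrite ln_Rpower.
  assert (5 / 8 * ln 2 <= ln 2 / ln 3 * ln 2) by (apply Rmult_le_compat_r; lra).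
  lra.
Qed.

Lemma Rpower_ge1 x c : 1 <= x -> 0 <= c -> 1 <= Rpower x c.
Proof.
  intros Hx Hc. rewrite <- (Rpower_O x) by lra. apply Rle_Rpower; auto.
Qed.

Theorem theorem2p6 (alpha : nat) (Halpha : (1 < alpha)%nat)
  (Hmod : (alpha mod 3 = 2)%nat) (a : nat) (Ha : (0 < a)%nat) :
  INR (S31 alpha a) <= 13 / 10 * Rpower (INR a) (ln 2 / ln 3).
Proof.
  assert (L2p : 0 < ln 2) by (pose proof ln_lt_2; lra).
  assert (L3 : ln 2 < ln 3) by (apply ln_increasing; lra).
  assert (Hc : 0 <= ln 2 / ln 3).
  { unfold Rdiv. apply Rmult_le_pos; [lra|]. left. apply Rinv_0_lt_compat. lra. }
  assert (Ha1 : 1 <= INR a) by (apply (le_INR 1); lia).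
  assert (Haa : (a <= 2 * 3 ^ a)%nat) by (pose proof (pow3_ge a); lia).
  destruct (exists_m a a Haa) as [H2|[k [Hk1 Hk2]]].
  - pose proof (S31_bound alpha 0 a Halpha Hmod ltac:(simpl; lia)) as HS.
    apply le_INR in HS. simpl in HS.
    pose proof (Rpower_ge1 (INR a) _ Ha1 Hc). lra.
  - pose proof (S31_bound alpha (S k) a Halpha Hmod Hk2) as HS.
    apply le_INR in HS. rewrite pow_INR in HS. simpl INR in HS.
    assert (Hmono : Rpower (INR (2 * 3 ^ k)) (ln 2 / ln 3) <= Rpower (INR a) (ln 2 / ln 3)).
    { apply Rle_Rpower_l; auto. split.
      - apply lt_0_INR. pose proof (Nat.pow_nonzero 3 k). lia.
      - apply le_INR. lia. }
    rewrite mult_INR, pow_INR in Hmono. simpl INR in Hmono.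
    replace (1 + 1) with 2 in Hmono by lra.
    replace (1 + 1 + 1) with 3 in Hmono by lra.
    rewrite <- Rpower_mult_distr in Hmono by (try apply pow_lt; lra).
    assert (H3k : Rpower (3 ^ k) (ln 2 / ln 3) = 2 ^ k).
    { unfold Rpower at 1. rewrite ln_pow by lra.
      replace (ln 2 / ln 3 * (INR k * ln 3)) with (INR k * ln 2) by (field; lra).
      rewrite <- (Rpower_pow k 2) by lra. reflexivity. }
    replace (2 + 1) with 3 in Hmono by lra. rewrite H3k in Hmono.
    pose proof key_const.
    assert (0 < 2 ^ k) by (apply pow_lt; lra).
    replace (1 + 1) with 2 in HS by lra.
    simpl pow in HS.
    assert (20 / 13 * 2 ^ k <= Rpower 2 (ln 2 / ln 3) * 2 ^ k) by
      (apply Rmult_le_compat_r; lra).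
    lra.
Qed.
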